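(* Let $(U,\|\cdot\|)$ be a uniformly convex Banach space and let $Q\subseteq U$ be a nonempty, bounded, closed, convex set. Let $r>0$ and let $\alpha_n:Q\to\mathbb{R}$ ($n\in\mathbb{N}$) be functions with $\alpha_n(q)\to 1$ as $n\to\infty$ for every $q\in Q$. Suppose $T:Q\to Q$ satisfies: for all $p,q\in Q$ with $\|p-q\|<r$, $$\|T^np-T^nq\|\leq \alpha_n(q)\|p-q\|\quad\text{for every } n\in\mathbb{N}.$$ If there exists $q_0\in Q$ such that the asymptotic radius of the sequence $\{T^nq_0\}_n$ relative to $Q$ is less than $r$, then $T$ has a fixed point.
   Context: For a bounded sequence $\{x_n\}_n$ in $U$, its asymptotic radius relative to $Q$ is $\rho=\inf_{y\in Q}\limsup_{n\to\infty}\|x_n-y\|$. *)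

(* Defs.v *)
From HB Require Import structures.
From mathcomp Require Import all_boot all_order all_algebra.
From mathcomp Require Import all_classical all_reals all_analysis.
Set Implicit Arguments. Unset Strict Implicit. Unset Printing Implicit Defensive.
Import Order.TTheory GRing.Theory Num.Theory.
Import numFieldNormedType.Exports.
Local Open Scope classical_set_scope.
Local Open Scope ring_scope.

Definition uniformly_convex {R : realType} (V : normedModType R) : Prop :=
  forall eps : R, 0 < eps -> eps <= 2 ->
    exists2 delta : R, 0 < delta &
      forall x y : V, `|x| <= 1 -> `|y| <= 1 -> eps <= `|x - y| ->
        `|(2 : R)^-1 *: (x + y)| <= 1 - delta.

Definition convex_subset {R : realType} (V : normedModType R) (Q : set V) : Prop :=
  forall x y (t : R), Q x -> Q y -> 0 <= t -> t <= 1 ->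
    Q (t *: x + (1 - t) *: y).

Definition bounded_subset {R : realType} (V : normedModType R) (Q : set V) : Prop :=
  exists M : R, forall x, Q x -> `|x| <= M.

Definition asymptotic_radius {R : realType} (V : normedModType R)
  (x : nat -> V) (Q : set V) : \bar R :=
  ereal_inf [set limn_esup (fun n => (`|x n - y|)%:E) | y in Q].

(* Main.v *)
Require Import Defs.
From HB Require Import structures.
From mathcomp Require Import all_boot all_order all_algebra.
From mathcomp Require Import all_classical all_reals all_analysis.
From mathcomp Require Import ring lra zify.
Import Order.TTheory GRing.Theory Num.Theory.
Import numFieldNormedType.Exports.
Local Open Scope classical_set_scope.
Local Open Scope ring_scope.
Definition ev (P : nat -> Prop) := exists N, forall n, (N <= n)%N -> P n.

Lemma ev_oo (V : set nat) : \oo V -> ev V.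
Proof. move=> [N _ HN]; exists N => n Hn; apply: HN. done. Qed.
Lemma oo_ev (N : nat) : \oo [set n | (N <= n)%N].
Proof. exists N => //. Qed.

Lemma esup_le (R : realType) (u : nat -> R) (c : R) :
  ev (fun n => u n <= c) -> (limn_esup (fun n => (u n)%:E) <= c%:E)%E.
Proof.
move=> [N HN]; rewrite /limn_esup limf_esupE.
apply: (@le_trans _ _ (ereal_sup ((fun n => (u n)%:E) @` [set n | (N <= n)%N]))).
  by apply: ereal_inf_lbound; exists [set n | (N <= n)%N] => //; apply: oo_ev.
apply: ge_ereal_sup => _ [n /= Hn <-]; rewrite lee_fin; exact: HN.
Qed.

Lemma esup_lt (R : realType) (u : nat -> R) (c : R) :
  (limn_esup (fun n => (u n)%:E) < c%:E)%E -> ev (fun n => u n <= c).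
Proof.
rewrite /limn_esup limf_esupE => /ereal_inf_lt [_ [V HV <-]] Hs.
have [N HN] := @ev_oo V HV; exists N => n Hn.
rewrite -lee_fin; apply: le_trans (ltW Hs).
by apply: ereal_sup_ubound; exists n => //; apply: HN.
Qed.

Lemma esup_ge0 (R : realType) (u : nat -> R) :
  (forall n, 0 <= u n) -> (0 <= limn_esup (fun n => (u n)%:E))%E.
Proof.
move=> H; rewrite /limn_esup limf_esupE; apply: le_ereal_inf_tmp => _ [V HV <-].
have [N HN] := @ev_oo V HV; apply: (@le_trans _ _ (u N)%:E); first by rewrite lee_fin.
by apply: ereal_sup_ubound; exists N => //; apply: HN.
Qed.
Lemma half_id (R : realType) : 1 - (2 : R)^-1 = 2^-1.
Proof. by field. Qed.

Lemma mid_id (R : realType) (U : normedModType R) (c : R) (a y1 y2 : U) :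
  (2 : R)^-1 *: (c^-1 *: (a - y1) + c^-1 *: (a - y2)) =
  c^-1 *: (a - ((2 : R)^-1 *: y1 + (1 - (2 : R)^-1) *: y2)).
Proof.
rewrite half_id -scalerDr scalerA mulrC -scalerA; congr (_ *: _).
rewrite scalerDr !scalerBr opprD addrACA; congr (_ + _).
rewrite -scalerDl.
have -> : (2:R)^-1 + 2^-1 = 1 by field.
by rewrite scale1r.
Qed.

Lemma ev_le (P1 P2 : nat -> Prop) : ev P1 -> (forall n, P1 n -> P2 n) -> ev P2.
Proof. move=> [N HN] H; exists N => n /HN; exact: H. Qed.

Lemma Klem (R : realType) (U : normedModType R) (Q : set U) (x : nat -> U) (rho : R) :
  uniformly_convex U -> convex_subset Q -> 0 <= rho ->
  (forall y c, Q y -> ev (fun n => `|x n - y| <= c) -> rho <= c) ->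
  forall eta, 0 < eta -> exists2 eps, 0 < eps & forall y1 y2, Q y1 -> Q y2 ->
    ev (fun n => `|x n - y1| <= rho + eps) -> ev (fun n => `|x n - y2| <= rho + eps) ->
    `|y1 - y2| <= eta.
Proof.
move=> UC CQ rho0 F1 eta eta0.
set M := rho + eta / 4.
have M0 : 0 < M by rewrite /M; lra.
set e := Order.min (eta / M) 2.
have e0 : 0 < e by rewrite /e lt_min divr_gt0 //=.
have e2 : e <= 2 by rewrite /e ge_min lexx orbT.
have eM : e <= eta / M by rewrite /e ge_min lexx.
have [d d0 Hd] := UC e e0 e2.
have d80 : 0 < d * eta / 8 by apply: divr_gt0 => //; apply: mulr_gt0.
exists (Order.min (eta / 4) (d * eta / 8)); first by rewrite lt_min d80 andbT; lra.
move=> y1 y2 Qy1 Qy2 [N1 H1] [N2 H2].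
set eps := Order.min (eta / 4) (d * eta / 8).
have eps1 : eps <= eta / 4 by rewrite /eps ge_min lexx.
have eps2 : eps <= d * eta / 8 by rewrite /eps ge_min lexx orbT.
have eps0 : 0 < eps by rewrite /eps lt_min d80 andbT; lra.
rewrite leNgt; apply/negP => Hlt.
set c := rho + eps.
have HN1 : `|x (maxn N1 N2) - y1| <= c by apply: H1; exact: leq_maxl.
have HN2 : `|x (maxn N1 N2) - y2| <= c by apply: H2; exact: leq_maxr.
have h2c : `|y1 - y2| <= c + c.
  have -> : y1 - y2 = (x (maxn N1 N2) - y2) - (x (maxn N1 N2) - y1).
    by rewrite opprB [RHS]addrC addrA subrK.
  apply: le_trans (ler_normB _ _) _; lra.
have rhobig : eta / 4 < rho by move: h2c Hlt; rewrite /c; lra.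
have c0 : 0 < c by rewrite /c; lra.
have cM : c <= M by rewrite /c /M; lra.
set m := (2 : R)^-1 *: y1 + (1 - (2 : R)^-1) *: y2.
have Qm : Q m by apply: CQ => //; rewrite ?invr_ge0 ?invf_le1 // ?ler1n.
have : ev (fun n => `|x n - m| <= c * (1 - d)).
  exists (maxn N1 N2) => n Hn.
  have Hn1 : `|x n - y1| <= c by apply: H1; apply: leq_trans Hn; exact: leq_maxl.
  have Hn2 : `|x n - y2| <= c by apply: H2; apply: leq_trans Hn; exact: leq_maxr.
  have := Hd (c^-1 *: (x n - y1)) (c^-1 *: (x n - y2)).
  rewrite mid_id !normrZ gtr0_norm ?invr_gt0 // -scalerBr normrZ gtr0_norm ?invr_gt0 //.
  have -> : (x n - y1) - (x n - y2) = y2 - y1 by rewrite opprB [LHS]addrC addrA subrK.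
  rewrite ![c^-1 * _]mulrC !ler_pdivrMr // !mul1r ler_pdivlMr //.
  move=> /(_ Hn1 Hn2); rewrite [c * _]mulrC => H; apply: H.
  rewrite distrC; apply: (@le_trans _ _ eta); last exact: ltW.
  apply: (@le_trans _ _ (e * M)); first by apply: ler_wpM2l => //; exact: ltW.
  by rewrite -ler_pdivlMr.
move=> /(F1 _ _ Qm).
rewrite /c. nra.
Qed.

Lemma arch_inv (R : realType) (eps : R) : 0 < eps ->
  exists k0, forall k, (k0 <= k)%N -> (k.+1%:R)^-1 <= eps.
Proof.
move=> e0; have ie0 : 0 <= eps^-1 by rewrite invr_ge0 ltW.
have := archi_boundP ie0; set K := Num.Def.archi_bound _ => HK.
exists K => k Hk.
rewrite -[eps]invrK lef_pV2 ?posrE ?invr_gt0 ?ltr0n //.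
apply: (le_trans (ltW HK)); rewrite ler_nat; exact: leqW.
Qed.

Lemma iterQ (U : Type) (Q : set U) (T : U -> U) :
  (forall q, Q q -> Q (T q)) -> forall k y, Q y -> Q (iter k T y).
Proof. move=> TQ; elim=> [|k IH] y Qy //=; apply: TQ; exact: IH. Qed.

Theorem mainTheorem2 (R : realType) (U : completeNormedModType R)
  (Q : set U) (r : R) (alpha : nat -> U -> R) (T : U -> U) :
  uniformly_convex U ->
  Q !=set0 -> bounded_subset Q -> closed Q -> convex_subset Q ->
  0 < r ->
  (forall q, Q q -> alpha n q @[n --> \oo] --> (1 : R)) ->
  (forall q, Q q -> Q (T q)) ->
  (forall p q, Q p -> Q q -> `|p - q| < r ->
     forall n : nat, (0 < n)%N ->
       `|iter n T p - iter n T q| <= alpha n q * `|p - q|) ->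
  (exists2 q0, Q q0 &
     (asymptotic_radius (fun n => iter n T q0) Q < r%:E)%E) ->
  exists2 x, Q x & T x = x.
Proof.
move=> UC _ _ Qcl CQ r0 Halpha TQ HT [q0 Qq0 Hrad].
set x := fun n => iter n T q0.
have Qx : forall n, Q (x n) by move=> n; apply: iterQ.
set A := asymptotic_radius x Q.
have A0 : (0 <= A)%E.
  apply: le_ereal_inf_tmp => _ [y Qy <-]; apply: esup_ge0 => n; exact: normr_ge0.
have Afin : A = (fine A)%:E.
  by rewrite fineK // ge0_fin_numE //; apply: lt_trans Hrad (ltry r).
set rho := fine A.
have rho0 : 0 <= rho by rewrite -lee_fin -Afin.
have rhor : rho < r by rewrite -lte_fin -Afin.
have F1 : forall y c, Q y -> ev (fun n => `|x n - y| <= c) -> rho <= c.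
  move=> y c Qy Hev; rewrite -lee_fin -Afin.
  apply: (@le_trans _ _ (limn_esup (fun n => (`|x n - y|)%:E))).
    by apply: ereal_inf_lbound; exists y.
  exact: esup_le.
have F2 : forall eps, 0 < eps -> exists y, Q y /\ ev (fun n => `|x n - y| <= rho + eps).
  move=> eps e0; have : (A < (rho + eps)%:E)%E by rewrite Afin lte_fin -/rho; lra.
  move=> /ereal_inf_lt [_ [y Qy <-] H]; exists y; split => //; exact: esup_lt.
have K := @Klem _ _ Q x rho UC CQ rho0 F1.
have Gle : forall y c c', c <= c' -> ev (fun n => `|x n - y| <= c) -> ev (fun n => `|x n - y| <= c').
  move=> y c c1 cc H; apply: (@ev_le _ _ H) => n Hn; exact: le_trans Hn cc.
have H1 : forall k : nat, exists y, Q y /\ ev (fun n => `|x n - y| <= rho + (k.+1%:R)^-1).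
  by move=> k; apply: F2; rewrite invr_gt0 ltr0n.
have [f Hf] := choice H1.
have Hfk : forall eps, 0 < eps -> exists k0, forall k, (k0 <= k)%N -> ev (fun n => `|x n - f k| <= rho + eps).
  move=> eps e0; have [k0 Hk0] := @arch_inv _ _ e0; exists k0 => k Hk.
  apply: (Gle _ _ _ _ (Hf k).2); rewrite lerD2l; exact: Hk0.
have fcv : cvg (f @ \oo).
  apply/cauchy_cvgP; apply: cauchy_exP => eps e0.
  have [eps' e'0 Hk] := K (eps / 2) ltac:(lra).
  have [k0 Hk0] := Hfk _ e'0.
  exists (f k0); exists k0 => // k /= Hk1; rewrite -ball_normE /=.
  apply: (le_lt_trans (Hk _ _ (Hf k0).1 (Hf k).1 (Hk0 _ (leqnn _)) (Hk0 _ Hk1))); lra.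
set z := lim (f @ \oo).
have Qz : Q z.
  apply: (@closed_cvg _ _ \oo _ f Q Qcl _ z fcv); apply: nearW => k; exact: (Hf k).1.
have Gz : forall eps, 0 < eps -> ev (fun n => `|x n - z| <= rho + eps).
  move=> eps e0.
  have /cvgrPdist_le/(_ (eps / 2) ltac:(lra)) Hn := fcv.
  have [N1 HN1] := @ev_oo _ Hn.
  have [k0 Hk0] := Hfk (eps / 2) ltac:(lra).
  have [N2 HN2] := Hk0 (maxn N1 k0) (leq_maxr _ _).
  exists N2 => n Hn2.
  apply: (le_trans (ler_distD (f (maxn N1 k0)) _ _)).
  have h1 : `|z - f (maxn N1 k0)| <= eps / 2 := HN1 _ (leq_maxl _ _).
  have h2 := HN2 n Hn2.
  rewrite (distrC (f _) z); lra.
have S2 : forall m eps', (0 < m)%N -> 0 < eps' -> rho + eps' < r -> 0 <= alpha m z ->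
    ev (fun n => `|x n - iter m T z| <= alpha m z * (rho + eps')).
  move=> m eps' m0 ep0 er a0; have [N HN] := Gz _ ep0; exists (N + m)%N => n Hn.
  have -> : x n = iter m T (x (n - m)%N) by rewrite /x -iterD subnKC //; lia.
  have Hd : `|x (n - m)%N - z| <= rho + eps' by apply: HN; lia.
  apply: (le_trans (HT _ _ (Qx _) Qz (le_lt_trans Hd er) m m0)).
  exact: (ler_wpM2l a0 Hd).
have S3 : forall eta, 0 < eta -> exists M0, forall m, (M0 <= m)%N -> `|iter m T z - z| <= eta.
  move=> eta eta0; have [eps e0 HK] := K eta eta0.
  set ee := Order.min (eps / 2) ((r - rho) / 2).
  have e'1 : ee <= eps / 2 by rewrite /ee ge_min lexx.
  have e'2 : ee <= (r - rho) / 2 by rewrite /ee ge_min lexx orbT.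
  have e'0 : 0 < ee by rewrite /ee lt_min; apply/andP; split; lra.
  set tol := Order.min (1 / 2) (eps / (2 * r)).
  have t1 : tol <= 1 / 2 by rewrite /tol ge_min lexx.
  have t2 : tol <= eps / (2 * r) by rewrite /tol ge_min lexx orbT.
  have t0 : 0 < tol by rewrite /tol lt_min; apply/andP; split; [lra | apply: divr_gt0 => //; lra].
  have t3 : tol * (2 * r) <= eps by rewrite -ler_pdivlMr //; lra.
  have /cvgrPdist_le/(_ tol t0) Ha := Halpha z Qz.
  have [M1 HM1] := @ev_oo _ Ha.
  exists (maxn M1 1) => m Hm.
  have := HM1 m (leq_trans (leq_maxl _ _) Hm); rewrite /= ler_norml => /andP [a1 a2].
  have a0 : 0 <= alpha m z by lra.
  have m0 : (0 < m)%N by move: Hm; rewrite geq_max => /andP [].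
  have S := S2 m ee m0 e'0 ltac:(lra) a0.
  rewrite distrC; apply: HK => //; first exact: iterQ.
  have := Gz _ e0; apply.
  apply: (Gle _ _ _ _ S).
  have h1 : alpha m z * (rho + ee) <= (1 + tol) * (rho + ee) by apply: ler_wpM2r; lra.
  have h2 : tol * (rho + ee) <= tol * r by apply: ler_wpM2l; lra.
  nra.
have Hall : forall eta, 0 < eta -> `|T z - z| <= eta.
  move=> eta eta0.
  set a1 := `|alpha 1%N z|.
  have a10 : 0 <= a1 by exact: normr_ge0.
  set e' := Order.min (r / 2) (eta / (a1 + 1)).
  have e'1 : e' <= r / 2 by rewrite /e' ge_min lexx.
  have e'2 : e' <= eta / (a1 + 1) by rewrite /e' ge_min lexx orbT.
  have e'0 : 0 < e' by rewrite /e' lt_min; apply/andP; split; [lra | apply: divr_gt0 => //; lra].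
  have e'3 : e' * (a1 + 1) <= eta by rewrite -ler_pdivlMr //; lra.
  have [M0 HM0] := S3 e' e'0.
  have dm := HM0 M0 (leqnn _).
  have dm1 := HM0 M0.+1 (leqnSn _); move: dm1 => /= dm1.
  have := HT (iter M0 T z) z (@iterQ _ _ _ TQ _ _ Qz) Qz ltac:(lra) 1%N isT; rewrite /= => H.
  apply: (le_trans (ler_distD (T (iter M0 T z)) _ _)); rewrite distrC.
  have h1 : alpha 1%N z * `|iter M0 T z - z| <= a1 * e'.
    apply: (le_trans (ler_wpM2r (normr_ge0 _) (ler_norm _))); apply: ler_wpM2l => //.
  have h2 : a1 * e' + e' <= eta by nra.
  lra.
exists z => //.
apply/eqP; rewrite -subr_eq0 -normr_eq0 eq_le normr_ge0 andbT.
rewrite leNgt; apply/negP => H.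
have := Hall _ (divr_gt0 H (ltr0n _ 2)); lra.
Qed.
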